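(* Let $(X_i,Y_i)_{i=1}^n$ be a V-geometrically ergodic Markov chain on $\mathcal{X}\times\mathcal{Y}$ with stationary distribution $\pi$ and constants $\gamma,\rho,B$, and let $\tilde S=(X_i,\tilde Y_i)_{i=1}^n$ with $\tilde Y_i=Y_i+\xi_i$ and $-\Xi/2\le\xi_i\le\Xi/2$ for all $i$. Let $\alpha\in(0,1)$ and let $P_n$ be the normalized weights of the BWA algorithm run on the noisy data $\tilde S$. For all $\epsilon\in(0,3M]$ and $\delta\in(0,1)$, if \[ n_e\ge\frac{288M^2}{\epsilon^2}\left(\ln\frac2\delta+\ln(1+\gamma Be^{-2})+\ln\mathcal{N}\!\left(\mathcal{H},\frac{\epsilon}{24L}\right)\right), \] then \[ \mathbb{P}\left(\sup_{h\in\mathcal{H}\setminus\mathcal{H}_{\gamma^*+\epsilon+\Xi}}P_n(h)\le\frac{\alpha^{n\epsilon/6}}{\mathcal{V}_{\epsilon/2}}\right)\ge1-\delta. \]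
   Context: V-geometric ergodicity: Let $\mathcal{Z}$ be a compact subset of $\mathbb{R}^N$ with a $\sigma$-algebra $\mathcal{F}$. For probability measures $P_1,P_2$ on $(\mathcal{Z},\mathcal{F})$, $\|P_1-P_2\|_{TV}=2\sup_{A\in\mathcal{F}}|P_1(A)-P_2(A)|$. A Markov chain $(Z_i)_{i\ge1}$ on $\mathcal{Z}$ with $n$-step transition probabilities $P^n(\cdot\mid z)$ and stationary distribution $\pi$ is V-geometrically ergodic with respect to a measurable $V:\mathcal{Z}\to[1,\infty)$ if there exist $\gamma<\infty$, $\rho<1$, $B<\infty$ such that for all $z\in\mathcal{Z}$ and $n\ge1$, $\|P^n(\cdot\mid z)-\pi\|_{TV}\le\gamma\rho^nV(z)$, and $\int_{\mathcal{Z}}V\,d\pi<B$. Setting: $\mathcal{X}\subset\mathbb{R}^d$ and $\mathcal{Y}\subset\mathbb{R}$ are compact, $\mathcal{Z}=\mathcal{X}\times\mathcal{Y}$. $\mathcal{H}$ is a set of functions $h:\mathcal{X}\to\mathcal{Y}$ contained in a ball of the Hölder space $C^q(\mathcal{X})$ ($q>0$), with norm $\|h\|_{C^q}=\|h\|_\infty+\sup_{x_1\ne x_2}\frac{|h(x_1)-h(x_2)|}{\|x_1-x_2\|^q}$. Constants: $M=\sup_{h\in\mathcal{H}}\max_{(x,y)\in\mathcal{Z}}|h(x)-y|$ and $L=\sup_{h_1\ne h_2\in\mathcal{H}}\max_{(x,y)\in\mathcal{Z}}\frac{||h_1(x)-y|-|h_2(x)-y||}{\|h_1-h_2\|_\infty}$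 (both assumed positive and finite). The covering number $\mathcal{N}(\mathcal{H},\epsilon)$ is the smallest number of balls of radius $\epsilon$ (in $\|\cdot\|_{C^q}$) covering $\mathcal{H}$. Noisy empirical loss $l_{\tilde S}(h)=\frac1n\sum_{i=1}^n|h(X_i)-\tilde Y_i|$; expected loss $l(h)=\mathbb{E}_{(X,Y)\sim\pi}|h(X)-Y|$ with respect to the stationary distribution of the noiseless chain. The noise $\xi_i$ are arbitrary random variables (no distributional assumption) bounded as stated, with $\Xi\ge0$ a constant. The effective sample size is $n_e=\left\lfloor \frac{n}{\lceil (8n/\ln(1/\rho))^{1/2}\rceil}\right\rfloor$. Prior and optimal loss: $\mu$ is a probability measure on $\mathcal{H}$; the sets $\mathcal{H}_t=\{h\in\mathcal{H}: l(h)\le t\}$ are $\mu$-measurable for all $t\in\mathbb{R}$. $\gamma^*=\inf\{t:\mu(\mathcal{H}_t)>0\}$, and for $\epsilon>0$, $\mathcal{V}_\epsilon=\mu(\mathcal{H}_{\gamma^*+\epsilon})$ (which is $>0$). BWA algorithm on noisy data, parameter $\alpha\in(0,1)$: $w_n(h)=\alpha^{n\,l_{\tilde S}(h)}$, $P_n(h)=w_n(h)/\int_{\mathcal{H}}w_n\,d\mu$, $\bar h_n(x)=\int_{\mathcal{H}}P_n(h)h(x)\,d\mu(h)$. Known fact (Zou et al. 2012, uniform convergence): for the noiseless data $S=(X_i,Y_i)_{i=1}^n$ with $l_S(h)=\frac1n\sum_{i=1}^n|h(X_i)-Y_i|$, for all $\epsilon\in(0,3M]$, $\delta\in(0,1)$,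 if $n_e\ge\frac{8M^2}{\epsilon^2}\big(\ln\frac2\delta+\ln(1+\gamma Be^{-2})+\ln\mathcal{N}(\mathcal{H},\frac{\epsilon}{4L})\big)$, then $\mathbb{P}(\forall h\in\mathcal{H},\ |l_S(h)-l(h)|<\epsilon)\ge1-\delta$. *)

(* Defs.v *)
From HB Require Import structures.
From mathcomp Require Import all_boot all_order all_algebra.
From mathcomp Require Import all_classical all_reals all_analysis.
From mathcomp Require Import measurable_realfun.
Import Order.TTheory GRing.Theory Num.Theory.
Import numFieldNormedType.Exports.

Set Implicit Arguments.
Unset Strict Implicit.
Unset Printing Implicit Defensive.

Local Open Scope classical_set_scope.
Local Open Scope ring_scope.

Definition Zopen (R : realType) (d : nat) : set_system ('rV[R]_d * R)%type :=
  open.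

Definition Zsp (R : realType) (d : nat) := g_sigma_algebraType (@Zopen R d).

Definition eucl_norm (R : realType) (d : nat) (x : 'rV[R]_d) : R :=
  Num.sqrt (\sum_(i < d) x ord0 i ^+ 2).

Definition sup_norm (R : realType) (d : nat) (Xs : set 'rV[R]_d)
  (h : 'rV[R]_d -> R) : \bar R :=
  ereal_sup [set (`|h x|)%:E | x in Xs].

Definition holder_seminorm (R : realType) (d : nat) (q : R)
  (Xs : set 'rV[R]_d) (h : 'rV[R]_d -> R) : \bar R :=
  ereal_sup [set r | exists x1 x2, [/\ Xs x1, Xs x2, x1 <> x2 &
     r = (`|h x1 - h x2| / (eucl_norm (x1 - x2)) `^ q)%:E]].

Definition holder_norm (R : realType) (d : nat) (q : R)
  (Xs : set 'rV[R]_d) (h : 'rV[R]_d -> R) : \bar R :=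
  (sup_norm Xs h + holder_seminorm q Xs h)%E.

Definition covers_with (R : realType) (d : nat) (q : R) (Xs : set 'rV[R]_d)
  (Hs : set ('rV[R]_d -> R)) (eps : R) (k : nat) : Prop :=
  exists c : 'I_k -> ('rV[R]_d -> R),
    (forall i, (holder_norm q Xs (c i) < +oo)%E) /\
    (forall h, Hs h -> exists i, (holder_norm q Xs (fun x => (h x - c i x)%R) <= eps%:E)%E).

Definition is_covering_number (R : realType) (d : nat) (q : R)
  (Xs : set 'rV[R]_d) (Hs : set ('rV[R]_d -> R)) (eps : R) (k : nat) : Prop :=
  covers_with q Xs Hs eps k /\ (forall j, covers_with q Xs Hs eps j -> (k <= j)%N).

Section Markov.
Context (R : realType) (d : nat).
Local Notation Z := (Zsp R d).

Definition tv_dist (P1 P2 : probability Z R) : \bar R :=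
  (2%:E * ereal_sup [set `|P1 A - P2 A| | A in measurable])%E.

Definition markov_chain (dO : measure_display) (Omega : measurableType dO)
  (P : probability Omega R) (Zc : nat -> Omega -> Z)
  (K : Z -> probability Z R) : Prop :=
  [/\ (forall i, measurable_fun setT (Zc i)),
      (forall A, measurable A -> measurable_fun [set: Z] ((fun z => K z A) : Z -> \bar R)) &
      (forall (A : nat -> set Z) (k : nat), (forall j, measurable (A j)) ->
         P (\bigcap_(j < k.+2) (Zc j @^-1` A j)) =
         (\int[P]_(w in \bigcap_(j < k.+1) (Zc j @^-1` A j)) K (Zc k w) (A k.+1))%E)].

Definition nstep_transitions (K : Z -> probability Z R)
  (Kn : nat -> Z -> probability Z R) : Prop :=
  (forall z A, measurable A -> Kn 1%N z A = K z A) /\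
  (forall n z A, measurable A ->
     Kn n.+1 z A = (\int[Kn n z]_y K y A)%E).

Definition stationary (K : Z -> probability Z R) (pi : probability Z R) : Prop :=
  forall A, measurable A -> pi A = (\int[pi]_z K z A)%E.

Definition V_geom_ergodic (K : Z -> probability Z R) (pi : probability Z R)
  (Zs : set Z) (V : Z -> R) (gamma rho B : R) : Prop :=
  [/\ measurable_fun Zs V, (forall z, Zs z -> 1 <= V z), rho < 1,
      (exists Kn, nstep_transitions K Kn /\
         forall z, Zs z -> forall n, (0 < n)%N ->
           (tv_dist (Kn n z) pi <= (gamma * rho ^+ n * V z)%:E)%E) &
      (\int[pi]_(z in Zs) (V z)%:E < B%:E)%E].

End Markov.

Definition exp_loss (R : realType) (d : nat) (pi : probability (Zsp R d) R)
  (Zs : set (Zsp R d)) (h : 'rV[R]_d -> R) : R :=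
  fine (\int[pi]_(z in Zs) (`|h z.1 - z.2|)%:E)%E.

Definition emp_loss (R : realType) (d : nat) (n : nat) (xs : nat -> 'rV[R]_d)
  (ys : nat -> R) (h : 'rV[R]_d -> R) : R :=
  n%:R^-1 * \sum_(i < n) `|h (xs i) - ys i|.

Definition eff_size (R : realType) (n : nat) (rho : R) : int :=
  Num.floor ((n%:R / (Num.ceil (Num.sqrt (8 * n%:R / ln rho^-1)))%:~R) : R).

Definition gamma_star (R : realType) (dH : measure_display)
  (HT : measurableType dH) (mu : probability HT R) (lossH : HT -> R) : R :=
  fine (ereal_inf [set t%:E | t in [set t | (0 < mu [set th | (lossH th <= t)%R])%E]]).

Definition Vprior (R : realType) (dH : measure_display)
  (HT : measurableType dH) (mu : probability HT R) (lossH : HT -> R) (eps : R) : R :=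
  fine (mu [set th | lossH th <= gamma_star mu lossH + eps]).

Definition bwa_weight (R : realType) (alpha : R) (n : nat) (lS : R) : R :=
  alpha `^ (n%:R * lS).

Definition bwa_post (R : realType) (dH : measure_display)
  (HT : measurableType dH) (mu : probability HT R) (alpha : R) (n : nat)
  (lS : HT -> R) (th : HT) : R :=
  bwa_weight alpha n (lS th) /
  fine (\int[mu]_t (bwa_weight alpha n (lS t))%:E)%E.

(* Main.v *)
Require Import Defs.
From HB Require Import structures.
From mathcomp Require Import all_boot all_order all_algebra.
From mathcomp Require Import all_classical all_reals all_analysis.
From mathcomp Require Import measurable_realfun.
From mathcomp Require Import ring lra.
Import Order.TTheory GRing.Theory Num.Theory.
Import numFieldNormedType.Exports.
Local Open Scope classical_set_scope.
Local Open Scope ring_scope.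

Lemma int_le_any (dH : measure_display) (HT : measurableType dH) (R : realType)
  (mu : {measure set HT -> \bar R}) (f g : HT -> \bar R) :
  (forall x, (0 <= g x)%E) -> (forall x, (g x <= f x)%E) ->
  (\int[mu]_x g x <= \int[mu]_x f x)%E.
Proof.
move=> g0 gf.
have f0 : forall x, (0 <= f x)%E by move=> x; exact: le_trans (g0 x) (gf x).
rewrite !ge0_integralTE//; apply: le_ereal_sup => _ [h hg <-].
by exists h => // x; exact: le_trans (hg x) (gf x).
Qed.

Lemma noise_bound (R : realType) (d n : nat) (xs : nat -> 'rV[R]_d) (ys xi : nat -> R)
  (Xi : R) (h : 'rV[R]_d -> R) : 0 <= Xi ->
  (forall i, (i < n)%N -> - (Xi / 2) <= xi i <= Xi / 2) ->
  `|emp_loss n xs (fun i => ys i + xi i) h - emp_loss n xs ys h| <= Xi / 2.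
Proof.
move=> hXi hxi; rewrite /emp_loss -mulrBr -sumrB.
case: n hxi => [|n] hxi.
  by rewrite big_ord0 mulr0 normr0 divr_ge0.
rewrite normrM ger0_norm ?invr_ge0 ?ler0n//.
apply: (le_trans (ler_wpM2l _ (ler_norm_sum _ _ _))); first by rewrite invr_ge0 ler0n.
apply: (@le_trans _ _ (n.+1%:R^-1 * \sum_(i < n.+1) (Xi / 2))).
  apply: ler_wpM2l; first by rewrite invr_ge0 ler0n.
  apply: ler_sum => i _.
  apply: le_trans (ler_dist_dist _ _) _.
  have := hxi i (ltn_ord i) => /andP[h1 h2].
  rewrite (_ : h (xs i) - (ys i + xi i) - (h (xs i) - ys i) = - xi i); last by ring.
  rewrite normrN.
  by rewrite ler_norml h1 h2.
rewrite sumr_const card_ord -mulr_natr.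
rewrite le_eqVlt; apply/orP; left; apply/eqP; field; by rewrite lt0r_neq0 // ltr0n.
Qed.
Theorem lemma4
  (R : realType) (d : nat) (Xs : set 'rV[R]_d) (Ys : set R) (q : R)
  (dH : measure_display) (HT : measurableType dH)
  (hf : HT -> 'rV[R]_d -> R) (mu : probability HT R)
  (dO : measure_display) (Omega : measurableType dO) (P : probability Omega R)
  (Zc : nat -> Omega -> Zsp R d) (K : Zsp R d -> probability (Zsp R d) R)
  (pi : probability (Zsp R d) R) (V : Zsp R d -> R) (gamma rho B : R)
  (xi : nat -> Omega -> R) (Xi : R) (n : nat) (alpha M L eps delta : R)
  (* X, Y compact; H a subset of a ball of C^q(X), functions X -> Y *)
  (hX : compact Xs) (hY : compact Ys) (hq : 0 < q)
  (hHY : forall th x, Xs x -> Ys (hf th x))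
  (hball : exists (c : 'rV[R]_d -> R) (r : R), (holder_norm q Xs c < +oo)%E /\
      forall th, (holder_norm q Xs (fun x => (hf th x - c x)%R) <= r%:E)%E)
  (hinj : forall th1 th2, (forall x, Xs x -> hf th1 x = hf th2 x) -> th1 = th2)
  (* the constants M and L, positive and finite *)
  (hM : ereal_sup [set r | exists th z, (Xs `*` Ys) z /\
           r = (`|hf th z.1 - z.2|)%:E] = M%:E)
  (hM0 : 0 < M)
  (hL : ereal_sup [set r | exists th1 th2 z,
           [/\ exists x, Xs x /\ hf th1 x <> hf th2 x, (Xs `*` Ys) z &
           r = (`| `|hf th1 z.1 - z.2| - `|hf th2 z.1 - z.2| | /
                 fine (sup_norm Xs (fun x => hf th1 x - hf th2 x)))%:E]] = L%:E)
  (hL0 : 0 < L)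
  (* the V-geometrically ergodic Markov chain on Z = X x Y *)
  (hmc : markov_chain P Zc K)
  (hZ : forall i w, (Xs `*` Ys) (Zc i w))
  (hstat : stationary K pi) (hpiZ : pi (Xs `*` Ys) = 1%E)
  (herg : V_geom_ergodic K pi (Xs `*` Ys) V gamma rho B)
  (hrho : 0 < rho)
  (* bounded noise *)
  (hxim : forall i, measurable_fun [set: Omega] (xi i))
  (hxi : forall i w, (i < n)%N -> - (Xi / 2) <= xi i w <= Xi / 2)
  (hXi : 0 <= Xi)
  (* BWA parameter, prior *)
  (halpha : 0 < alpha < 1)
  (hHt : forall t : R,
      measurable [set th | exp_loss pi (Xs `*` Ys) (hf th) <= t])
  (* Known fact (Zou et al. 2012): uniform convergence on the noiseless data *)
  (hZou : forall e dl : R, 0 < e <= 3 * M -> 0 < dl < 1 ->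
      (exists k : nat, is_covering_number q Xs (range hf) (e / (4 * L)) k /\
         8 * M ^+ 2 / e ^+ 2 * (ln (2 / dl) + ln (1 + gamma * B * expR (-2))
                                 + ln k%:R) <= (eff_size n rho)%:~R) ->
      exists E : set Omega, [/\ measurable E,
        E `<=` [set w | forall th,
           `|emp_loss n (fun i => (Zc i w).1) (fun i => (Zc i w).2) (hf th)
             - exp_loss pi (Xs `*` Ys) (hf th)| < e] &
        ((1 - dl)%:E <= P E)%E])
  (heps : 0 < eps <= 3 * M) (hdelta : 0 < delta < 1)
  (hne : exists k : nat, is_covering_number q Xs (range hf) (eps / (24 * L)) k /\
         288 * M ^+ 2 / eps ^+ 2 * (ln (2 / delta) + ln (1 + gamma * B * expR (-2))
                                 + ln k%:R) <= (eff_size n rho)%:~R) :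
  exists E : set Omega, [/\ measurable E,
    E `<=` [set w |
      (ereal_sup [set (bwa_post mu alpha n
           (fun t => emp_loss n (fun i => (Zc i w).1)
                               (fun i => (Zc i w).2 + xi i w) (hf t)) th)%:E
         | th in [set th | ~ (exp_loss pi (Xs `*` Ys) (hf th) <=
              gamma_star mu (fun t => exp_loss pi (Xs `*` Ys) (hf t)) + eps + Xi)%R]]
       <= (alpha `^ (n%:R * eps / 6) /
           Vprior mu (fun t => exp_loss pi (Xs `*` Ys) (hf t)) (eps / 2))%:E)%E] &
    ((1 - delta)%:E <= P E)%E].
Proof.
case/andP: heps => e0 e3; case/andP: halpha => a0 a1.
have L0 : L != 0 by rewrite lt0r_neq0.
have eps0 : eps != 0 by rewrite lt0r_neq0.
set l := fun t => exp_loss pi (Xs `*` Ys) (hf t).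
set gs := gamma_star mu l.
set H := [set th | l th <= gs + eps / 2].
have mH : measurable H by exact: hHt.
have muH : (0 < mu H)%E.
  have [t0 Ht0] : exists t : R, (0 < mu [set th | (l th <= t)%R])%E.
    apply: contrapT => hne0.
    have z k : mu [set th | (l th <= k%:R)%R] = 0%E.
      apply/eqP; rewrite eq_le measure_ge0 andbT leNgt; apply/negP => hp.
      by apply: hne0; exists k%:R.
    have cov : setT `<=` \bigcup_k [set th | l th <= k%:R].
      move=> th _; exists (Num.Def.archi_bound `|l th|) => //=.
      apply/ltW; apply: le_lt_trans (ler_norm _) _; exact: archi_boundP.
    have := @measure_sigma_subadditive _ _ _ mu setT (fun k => [set th | l th <= k%:R]) (fun k => hHt _) measurableT cov.
    rewrite eseries0 ?probability_setT; last by move=> i _ _; exact: z.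
    move=> h; have : (1 <= 0 :> \bar R)%E by rewrite -(probability_setT mu); exact: h.
    by rewrite lee_fin ler10.
  have : (ereal_inf [set t%:E | t in [set t | (0 < mu [set th | (l th <= t)%R])%E]] < (gs + eps/2)%:E)%E.
  { rewrite /gs /gamma_star.
    case E: ereal_inf => [r| |] /=.
    - by rewrite lte_fin ltrDl divr_gt0.
    - have : (ereal_inf [set t%:E | t in [set t | (0 < mu [set th | (l th <= t)%R])%E]] <= t0%:E)%E.
        by apply: ereal_inf_le; exists t0%:E => //; exists t0.
      by rewrite E.
    - by rewrite ltNyr. }
  move/ereal_inf_lt => [_ [t /= Ht <-]]; rewrite lte_fin => tlt.
  apply: lt_le_trans Ht _; apply: le_measure; rewrite ?inE; [exact: hHt|exact: mH|].
  by move=> th /= hth; apply: le_trans hth (ltW tlt).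
set Vh := fine (mu H).
have hV : mu H = Vh%:E.
  rewrite /Vh fineK // ge0_fin_numE ?measure_ge0 //.
  exact: le_lt_trans (probability_le1 _ mH) (ltry _).
have Vh0 : 0 < Vh by rewrite -lte_fin -hV.
have he6 : 0 < eps/6 <= 3 * M.
{ apply/andP; split; first by rewrite divr_gt0.
  lra. }
have hk6 : exists k : nat,
     is_covering_number q Xs (range hf) (eps/6 / (4 * L)) k /\
     8 * M ^+ 2 / (eps/6) ^+ 2 * (ln (2 / delta) + ln (1 + gamma * B * expR (-2))
                                 + ln k%:R) <= (eff_size n rho)%:~R.
{ case: hne => k [hk1 hk2]; exists k; split.
    by rewrite (_ : eps/6/(4*L) = eps/(24*L)) //; field.
  by rewrite (_ : 8*M^+2/(eps/6)^+2 = 288*M^+2/eps^+2) //; field. }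
have [E [mE hE PE]] := hZou (eps/6) delta he6 hdelta hk6.
exists E; split => //.
move=> w /hE /= Hw.
apply: ge_ereal_sup => _ [th /= Hth <-]; rewrite lee_fin.
set xs := fun i => (Zc i w).1.
set ys := fun i => (Zc i w).2.
pose lt := fun t => emp_loss n xs (fun i => ys i + xi i w) (hf t).
have hn t : `|lt t - emp_loss n xs ys (hf t)| <= Xi/2 :=
  @noise_bound R d n xs ys (fun i => xi i w) Xi (hf t) hXi (fun i hi => hxi i w hi).
have up t : lt t <= l t + eps/6 + Xi/2.
  have := Hw t; rewrite -/(l t) => Hwt.
  move: (hn t) Hwt; rewrite ler_norml ltr_norml => /andP[? ?] /andP[? ?]; lra.
have lo t : l t - eps/6 - Xi/2 <= lt t.
  have := Hw t; rewrite -/(l t) => Hwt.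
  move: (hn t) Hwt; rewrite ler_norml ltr_norml => /andP[? ?] /andP[? ?]; lra.
have Hth' : gs + eps + Xi < l th by rewrite ltNge; apply/negP.
rewrite /Vprior -/gs -/H -/Vh -/lt /bwa_post.
pose b := gs + eps/2 + eps/6 + Xi/2.
pose c := alpha `^ (n%:R * b).
have c0 : 0 < c by exact: powR_gt0.
have hn0 : 0 <= n%:R :> R by exact: ler0n.
have g0 : forall t, (0 <= (c * \1_H t)%:E)%E.
  by move=> t; rewrite lee_fin indicE mulr_ge0 ?powR_ge0 ?ler0n.
have gf : forall t, ((c * \1_H t)%:E <= (bwa_weight alpha n (lt t))%:E)%E.
  move=> t; rewrite lee_fin indicE; case: (boolP (t \in H)) => [/set_mem Ht|_]; last first.
    by rewrite mulr0 powR_ge0.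
  rewrite mulr1 /bwa_weight; apply: ger_powR; first by rewrite a0 ltW.
  apply: ler_wpM2l; first exact: ler0n.
  move: Ht; rewrite /H /= => Ht; have := up t; rewrite /b; lra.
have hI : (c%:E * mu H <= \int[mu]_t (bwa_weight alpha n (lt t))%:E)%E.
  have := @int_le_any _ _ R mu (fun t => (bwa_weight alpha n (lt t))%:E) (fun t => (c * \1_H t)%:E) g0 gf.
  rewrite (@integralZl_indic _ _ _ mu setT measurableT (fun _ => H) c) //; last first.
    by move=> c0'; exfalso; move: c0'; rewrite ltNge powR_ge0.
  by rewrite integral_indic // setIT.
move: hI; case: (\int[mu]_t (bwa_weight alpha n (lt t))%:E)%E => [r| |] hI /=.
- rewrite hV -EFinM lee_fin in hI.
  have r0 : 0 < r by apply: lt_le_trans hI; exact: mulr_gt0.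
  rewrite /bwa_weight.
  apply: (@le_trans _ _ (alpha `^ (n%:R * lt th) / (c * Vh))).
    apply: ler_wpM2l; first exact: powR_ge0.
    by rewrite lef_pV2 // ?posrE ?mulr_gt0.
  rewrite invfM mulrA -powRB; last by apply/implyP => _; rewrite lt0r_neq0.
  apply: ler_wpM2r; first by rewrite invr_ge0 ltW.
  apply: ger_powR; first by rewrite a0 ltW.
  have key : eps/6 <= lt th - b by have := lo th; rewrite /b; lra.
  nra.
- by rewrite invr0 mulr0 divr_ge0 ?powR_ge0 ?ltW.
- by rewrite hV -EFinM leeNy_eq in hI.
Qed.
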